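(* Let $0\to M\to P_r\to\cdots\to P_1\to P_0\to N\to0$ and $0\to M\to Q_r\to\cdots\to Q_1\to Q_0\to N\to0$ be exact sequences in an abelian category which represent the same class in $\mathrm{Ext}^{r+1}(N,M)$. If all $P_i$ and $Q_i$ are projective, then \[\bigoplus_{i\ge0}(P_{2i}\oplus Q_{2i+1})\cong\bigoplus_{i\ge0}(P_{2i+1}\oplus Q_{2i}),\] where $P_i=Q_i=0$ for $i>r$. *)

(* Defs.v *)
From HB Require Import structures.
From mathcomp Require Import all_boot all_order all_algebra.
From Stdlib Require Import Relations.
Set Implicit Arguments. Unset Strict Implicit. Unset Printing Implicit Defensive.
Import GRing.Theory.
Local Open Scope ring_scope.

Record precat := Cat {
  Obj :> Type;
  Hom : Obj -> Obj -> zmodType;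
  idm : forall A, Hom A A;
  comp : forall A B C, Hom B C -> Hom A B -> Hom A C;
  compA : forall A B C D (h : Hom C D) (g : Hom B C) (f : Hom A B),
      comp h (comp g f) = comp (comp h g) f;
  comp1m : forall A B (f : Hom A B), comp (idm B) f = f;
  compm1 : forall A B (f : Hom A B), comp f (idm A) = f;
  compDl : forall A B C (g g' : Hom B C) (f : Hom A B),
      comp (g + g') f = comp g f + comp g' f;
  compDr : forall A B C (g : Hom B C) (f f' : Hom A B),
      comp g (f + f') = comp g f + comp g f'
}.
Arguments Hom {p} A B.
Arguments idm {p} A.
Arguments comp {p A B C} g f.

Section Cat.
Variable C : precat.

Definition is_zero_obj (Z : C) : Prop := idm Z = 0.

Definition mono (A B : C) (m : Hom A B) : Prop :=
  forall X (g h : Hom X A), comp m g = comp m h -> g = h.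
Definition epi (A B : C) (e : Hom A B) : Prop :=
  forall X (g h : Hom B X), comp g e = comp h e -> g = h.

Definition is_iso (A B : C) : Prop :=
  exists (f : Hom A B) (g : Hom B A), comp g f = idm A /\ comp f g = idm B.

Definition is_kernel (A B : C) (f : Hom A B) (K : C) (k : Hom K A) : Prop :=
  comp f k = 0 /\
  forall X (g : Hom X A), comp f g = 0 -> exists! h : Hom X K, comp k h = g.
Definition is_cokernel (A B : C) (f : Hom A B) (D : C) (c : Hom B D) : Prop :=
  comp c f = 0 /\
  forall X (g : Hom B X), comp g f = 0 -> exists! h : Hom D X, comp h c = g.

Definition is_biprod (A B S : C) (i1 : Hom A S) (i2 : Hom B S)
    (p1 : Hom S A) (p2 : Hom S B) : Prop :=
  [/\ comp p1 i1 = idm A, comp p2 i2 = idm B, comp p1 i2 = 0, comp p2 i1 = 0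
    & comp i1 p1 + comp i2 p2 = idm S].

Definition abelian : Prop :=
  (exists Z : C, is_zero_obj Z) /\
  [/\ (forall A B : C, exists S i1 i2 p1 p2, @is_biprod A B S i1 i2 p1 p2),
      (forall (A B : C) (f : Hom A B), exists K (k : Hom K A), is_kernel f k),
      (forall (A B : C) (f : Hom A B), exists D (c : Hom B D), is_cokernel f c),
      (forall (A B : C) (m : Hom A B), mono m ->
         exists D (g : Hom B D), is_kernel g m)
    & (forall (A B : C) (e : Hom A B), epi e ->
         exists K (g : Hom K A), is_cokernel g e)].

(* exactness of A --f--> B --g--> C0 at B: gf = 0 and ker g <= im f,
   i.e. the kernel of g composed with the cokernel of f vanishes. *)
Definition exact_at (A B C0 : C) (f : Hom A B) (g : Hom B C0) : Prop :=
  comp g f = 0 /\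
  forall K (k : Hom K B) D (c : Hom B D),
    is_kernel g k -> is_cokernel f c -> comp c k = 0.

Definition projective (P : C) : Prop :=
  forall (A B : C) (e : Hom A B), epi e ->
    forall f : Hom P B, exists g : Hom P A, comp e g = f.

Fixpoint is_biprod_seq (L : seq C) (S : C) : Prop :=
  match L with
  | [::] => is_zero_obj S
  | X :: L' => exists T, is_biprod_seq L' T /\
                 exists i1 i2 p1 p2, @is_biprod X T S i1 i2 p1 p2
  end.

(* A (candidate) extension 0 -> M -> P_r -> ... -> P_0 -> N -> 0
   (only the P_i with i <= r, and d_i : P_{i+1} -> P_i with i < r, matter). *)
Record ext (N M : C) (r : nat) := Ext {
  eobj : nat -> C;
  ediff : forall i, Hom (eobj i.+1) (eobj i);
  eaug : Hom (eobj 0) N;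
  eincl : Hom M (eobj r)
}.

Definition exact_ext (N M : C) (r : nat) (E : ext N M r) : Prop :=
  [/\ epi (eaug E),
      (match r return Hom M (eobj E r) -> Prop with
       | 0 => fun i => mono i /\ exact_at i (eaug E)
       | s.+1 => fun i => mono i /\ exact_at i (ediff E s)
       end) (eincl E),
      (0 < r)%N -> exact_at (ediff E 0) (eaug E)
    & forall i, (i.+1 < r)%N -> exact_at (ediff E i.+1) (ediff E i)].

Definition ext_mor (N M : C) (r : nat) (E F : ext N M r) : Prop :=
  exists phi : forall i, Hom (eobj E i) (eobj F i),
    [/\ comp (eaug F) (phi 0%N) = eaug E,
        comp (phi r) (eincl E) = eincl F
      & forall i, (i < r)%N ->
          comp (phi i) (ediff E i) = comp (ediff F i) (phi i.+1)].

Definition ext_step (N M : C) (r : nat) (E F : ext N M r) : Prop :=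
  [/\ exact_ext E, exact_ext F & ext_mor E F].

(* Yoneda equivalence: same class in Ext^{r+1}(N, M) *)
Definition yoneda_equiv (N M : C) (r : nat) : ext N M r -> ext N M r -> Prop :=
  Relation_Operators.clos_refl_sym_trans _ (@ext_step N M r).

End Cat.

(* Main.v *)
Require Import Defs.
From mathcomp Require Import all_boot all_order all_algebra.
From Stdlib Require Import Relations ClassicalEpsilon Permutation.
Set Implicit Arguments. Unset Strict Implicit. Unset Printing Implicit Defensive.
Import GRing.Theory.
Local Open Scope ring_scope.

Notation cp := Defs.comp.
Notation Hm := Defs.Hom.
Notation compA := Defs.compA.
Notation comp1m := Defs.comp1m.
Notation compm1 := Defs.compm1.
Notation compDl := Defs.compDl.
Notation compDr := Defs.compDr.

Section Basic.
Variable C : precat.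

Lemma comp0m (A B D : C) (f : Hm A B) : cp (0 : Hm B D) f = 0.
Proof. by apply: (addrI (cp (0 : Hm B D) f)); rewrite -compDl !addr0. Qed.
Lemma compm0 (A B D : C) (g : Hm B D) : cp g (0 : Hm A B) = 0.
Proof. by apply: (addrI (cp g (0 : Hm A B))); rewrite -compDr !addr0. Qed.
Lemma compNm (A B D : C) (g : Hm B D) (f : Hm A B) : cp (- g) f = - cp g f.
Proof. by apply: (addrI (cp g f)); rewrite -compDl !subrr comp0m. Qed.
Lemma compmN (A B D : C) (g : Hm B D) (f : Hm A B) : cp g (- f) = - cp g f.
Proof. by apply: (addrI (cp g f)); rewrite -compDr !subrr compm0. Qed.
Lemma compBm (A B D : C) (g g' : Hm B D) (f : Hm A B) : cp (g - g') f = cp g f - cp g' f.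
Proof. by rewrite compDl compNm. Qed.
Lemma compmB (A B D : C) (g : Hm B D) (f f' : Hm A B) : cp g (f - f') = cp g f - cp g f'.
Proof. by rewrite compDr compmN. Qed.
Lemma compAE (A B D E : C) (g : Hm B D) (f : Hm A B) (h : Hm A D) (a : Hm E A) :
  cp g f = h -> cp g (cp f a) = cp h a.
Proof. by move=> <-; rewrite compA. Qed.

Lemma kernel_mono (A B K : C) (f : Hm A B) (k : Hm K A) : is_kernel f k -> mono k.
Proof.
move=> [fk0 H] X g h e.
case: (H X (cp k g)); first by rewrite compA fk0 comp0m.
move=> u [_ Hu].
by rewrite -(Hu g erefl) (Hu h (esym e)).
Qed.

Lemma mono_comp (A B D : C) (g : Hm B D) (f : Hm A B) : mono g -> mono f -> mono (cp g f).
Proof. by move=> mg mf X x y; rewrite -!compA => /mg /mf. Qed.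

Lemma zero_to (Z A : C) : is_zero_obj Z -> forall f : Hm A Z, f = 0.
Proof. by move=> hz f; rewrite -[f]comp1m hz comp0m. Qed.
Lemma zero_from (Z A : C) : is_zero_obj Z -> forall f : Hm Z A, f = 0.
Proof. by move=> hz f; rewrite -[f]compm1 hz compm0. Qed.

Lemma iso_refl (A : C) : is_iso A A.
Proof. by exists (idm A), (idm A); rewrite comp1m. Qed.
Lemma iso_sym (A B : C) : is_iso A B -> is_iso B A.
Proof. by move=> [f [g [h1 h2]]]; exists g, f. Qed.
Lemma iso_trans (A B D : C) : is_iso A B -> is_iso B D -> is_iso A D.
Proof.
move=> [f [g [h1 h2]]] [f' [g' [h1' h2']]]; exists (cp f' f), (cp g g'); split.
  by rewrite -compA (compAE _ h1') comp1m.
by rewrite -compA (compAE _ h2) comp1m.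
Qed.

Lemma zero_iso (Z Z' : C) : is_zero_obj Z -> is_zero_obj Z' -> is_iso Z Z'.
Proof. by move=> h h'; exists 0, 0; rewrite h h' !comp0m. Qed.

Lemma bp_iso (A B S A' B' S' : C) (i1 : Hm A S) (i2 : Hm B S) p1 p2
  (j1 : Hm A' S') (j2 : Hm B' S') q1 q2 :
  is_biprod i1 i2 p1 p2 -> is_biprod j1 j2 q1 q2 -> is_iso A A' -> is_iso B B' -> is_iso S S'.
Proof.
rewrite /is_biprod /is_iso; move=> [e11 e22 e12 e21 es] [f11 f22 f12 f21 fs] [f [f' [ff' f'f]]] [g [g' [gg' g'g]]].
exists (cp j1 (cp f p1) + cp j2 (cp g p2)), (cp i1 (cp f' q1) + cp i2 (cp g' q2)).
split; rewrite !compDl !compDr -!compA.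
  rewrite (compAE _ f11) (compAE _ f12) (compAE _ f21) (compAE _ f22) !comp0m !compm0 !comp1m.
  by rewrite addr0 add0r (compAE _ ff') (compAE _ gg') !comp1m.
rewrite (compAE _ e11) (compAE _ e12) (compAE _ e21) (compAE _ e22) !comp0m !compm0 !comp1m.
by rewrite addr0 add0r (compAE _ f'f) (compAE _ g'g) !comp1m.
Qed.


Lemma biprod_swap (A B S : C) (i1 : Hm A S) (i2 : Hm B S) p1 p2 :
  is_biprod i1 i2 p1 p2 -> is_biprod i2 i1 p2 p1.
Proof. by move=> [? ? ? ? e]; split=> //; rewrite addrC. Qed.

Lemma biprod_zero (A Z : C) : is_zero_obj Z -> is_biprod (idm A) (0 : Hm Z A) (idm A) 0.
Proof. by move=> hz; split; rewrite ?comp1m ?comp0m ?compm0 ?hz // addr0. Qed.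

End Basic.

Ltac bnorm := rewrite ?compDl ?compDr -?compA ?compNm ?compmN ?comp0m ?compm0 ?comp1m ?compm1
   ?addr0 ?add0r ?subr0 ?sub0r ?oppr0 ?opprK.

Ltac bhyps := repeat match goal with H : cp _ _ = _ |- _ => progress rewrite ?(compAE _ H) ?H end.

Section Bsum.
Variable C : precat.
Hypothesis HC : abelian C.

Record bpd (A B : C) := BPD { bo : C; bi1 : Hm A bo; bi2 : Hm B bo; bp1 : Hm bo A;
  bp2 : Hm bo B; bprop : is_biprod bi1 bi2 bp1 bp2 }.

Lemma bpd_inh (A B : C) : inhabited (bpd A B).
Proof.
case: HC => _ [hb _ _ _ _]; have [S [i1 [i2 [p1 [p2 h]]]]] := hb A B.
by constructor; exact: (BPD h).
Qed.

Definition bs (A B : C) : bpd A B := epsilon (bpd_inh A B) (fun _ => True).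
Definition bsum (A B : C) : C := bo (bs A B).

Lemma zinh : inhabited {Z : C | is_zero_obj Z}.
Proof. by case: HC => [[Z hZ] _]; constructor; exists Z. Qed.
Definition Z0 : C := proj1_sig (epsilon zinh (fun _ => True)).
Lemma Z0P : is_zero_obj Z0.
Proof. exact: proj2_sig (epsilon zinh (fun _ => True)). Qed.

Definition sumL (L : seq C) : C := foldr bsum Z0 L.

Lemma bsum_cong (A B A' B' : C) : is_iso A A' -> is_iso B B' -> is_iso (bsum A B) (bsum A' B').
Proof. exact: (bp_iso (bprop (bs A B)) (bprop (bs A' B'))). Qed.

Lemma bsum_comm (A B : C) : is_iso (bsum A B) (bsum B A).
Proof.
exact: (bp_iso (biprod_swap (bprop (bs A B))) (bprop (bs B A)) (iso_refl _) (iso_refl _)).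
Qed.

Lemma bsum_zero (A Z : C) : is_zero_obj Z -> is_iso (bsum A Z) A.
Proof.
move=> hz; exact: (bp_iso (bprop (bs A Z)) (biprod_zero A hz) (iso_refl _) (iso_refl _)).
Qed.

Lemma bsum_assoc (A B D : C) : is_iso (bsum A (bsum B D)) (bsum (bsum A B) D).
Proof.
set T := bs B D; set S := bs A (bsum B D); set U := bs A B.
have [e11 e22 e12 e21 es] := bprop S.
have [f11 f22 f12 f21 fs] := bprop T.
have [g11 g22 g12 g21 gs] := bprop U.
have H : is_biprod (cp (bi1 S) (bp1 U) + cp (bi2 S) (cp (bi1 T) (bp2 U))) (cp (bi2 S) (bi2 T))
   (cp (bi1 U) (bp1 S) + cp (bi2 U) (cp (bp1 T) (bp2 S))) (cp (bp2 T) (bp2 S)).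
  split; bnorm; bhyps; bnorm; bhyps; bnorm => //.
  by rewrite -addrA -compDr !compA -compDl fs comp1m es.
exact: (bp_iso H (bprop (bs (bsum A B) D)) (iso_refl _) (iso_refl _)).
Qed.

Lemma bsum_congl (A B B' : C) : is_iso B B' -> is_iso (bsum A B) (bsum A B').
Proof. by move=> h; apply: bsum_cong => //; apply: iso_refl. Qed.

Lemma sumL_app_r (L1 L2 L2' : seq C) : is_iso (sumL L2) (sumL L2') ->
  is_iso (sumL (L1 ++ L2)) (sumL (L1 ++ L2')).
Proof. by elim: L1 => //= x L1 IH h; apply: bsum_congl; apply: IH. Qed.

Lemma sumL_cat (L1 L2 : seq C) : is_iso (sumL (L1 ++ L2)) (bsum (sumL L1) (sumL L2)).
Proof.
elim: L1 => /= [|x L1 IH].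
  apply: iso_sym; apply: iso_trans (bsum_comm _ _) (bsum_zero _ Z0P).
apply: iso_trans (bsum_congl _ IH) (bsum_assoc _ _ _).
Qed.

Lemma sumL_app_l (L1 L1' L2 : seq C) : is_iso (sumL L1) (sumL L1') ->
  is_iso (sumL (L1 ++ L2)) (sumL (L1' ++ L2)).
Proof.
move=> h; apply: iso_trans (sumL_cat _ _) _; apply: iso_sym; apply: iso_trans (sumL_cat _ _) _.
by apply: bsum_cong; [apply: iso_sym | apply: iso_refl].
Qed.

Lemma sumL_perm (L L' : seq C) : Permutation L L' -> is_iso (sumL L) (sumL L').
Proof.
elim => /=.
- exact: iso_refl.
- by move=> x l l' _ h; apply: bsum_congl.
- move=> x y l; apply: iso_trans (bsum_assoc _ _ _) _.
  apply: iso_trans _ (iso_sym (bsum_assoc _ _ _)).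
  by apply: bsum_cong; [apply: bsum_comm | apply: iso_refl].
- by move=> l l' l'' _ h1 _ h2; apply: iso_trans h1 h2.
Qed.

Lemma sumL_expand (A B : C) : is_iso (sumL [:: bsum A B]) (sumL [:: A; B]).
Proof.
rewrite /=; apply: iso_trans (bsum_zero _ Z0P) _; apply: iso_sym.
apply: iso_trans (bsum_assoc _ _ _) (bsum_zero _ Z0P).
Qed.

Lemma bps_sumL (L : seq C) (S : C) : is_biprod_seq L S -> is_iso S (sumL L).
Proof.
elim: L S => /= [|x L IH] S.
  by move=> h; apply: zero_iso h Z0P.
move=> [T [hT [i1 [i2 [p1 [p2 h]]]]]].
exact: (bp_iso h (bprop (bs x (sumL L))) (iso_refl _) (IH _ hT)).
Qed.

End Bsum.
Section EvOd.
Variable T : Type.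
Local Open Scope nat_scope.
Definition ev (f : nat -> T) (n : nat) := [seq f i | i <- iota 0 n.+1 & ~~ odd i].
Definition od (f : nat -> T) (n : nat) := [seq f i | i <- iota 0 n.+1 & odd i].

Lemma iota1 n : iota 1 n = [seq i.+1 | i <- iota 0 n].
Proof. by rewrite -(iotaDl 1 0). Qed.

Lemma iota0S n : iota 0 n.+1 = 0 :: iota 1 n. Proof. by []. Qed.

Lemma ev_S f n : ev f n.+1 = f 0 :: od (fun i => f i.+1) n.
Proof.
rewrite /ev /od (iota0S n.+1) iota1; set s := iota 0 n.+1; rewrite /= filter_map -map_comp.
f_equal; f_equal; by apply: eq_filter => i /=; rewrite ?negbK.
Qed.
Lemma od_S f n : od f n.+1 = ev (fun i => f i.+1) n.
Proof.
rewrite /ev /od (iota0S n.+1) iota1; set s := iota 0 n.+1; rewrite /= filter_map -map_comp.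
f_equal; f_equal; by apply: eq_filter => i /=.
Qed.
Lemma ev0 f : ev f 0 = [:: f 0]. Proof. by []. Qed.
Lemma od0 f : od f 0 = [::]. Proof. by []. Qed.

Lemma ev_snoc f n : ev f n.+1 = ev f n ++ (if odd n.+1 then [::] else [:: f n.+1]).
Proof.
rewrite /ev (_ : n.+2 = (n.+1 + 1)%N); last by rewrite addn1.
rewrite iotaD filter_cat map_cat add0n /=.
by case: (odd n).
Qed.
Lemma od_snoc f n : od f n.+1 = od f n ++ (if odd n.+1 then [:: f n.+1] else [::]).
Proof.
rewrite /od (_ : n.+2 = (n.+1 + 1)%N); last by rewrite addn1.
rewrite iotaD filter_cat map_cat add0n /=.
by case: (odd n).
Qed.

Lemma ev_ext f g n : (forall i, i <= n -> f i = g i) -> ev f n = ev g n.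
Proof.
move=> h; apply/eq_in_map => i; rewrite mem_filter mem_iota add0n ltnS => /andP [_ hi].
exact: h.
Qed.
Lemma od_ext f g n : (forall i, i <= n -> f i = g i) -> od f n = od g n.
Proof.
move=> h; apply/eq_in_map => i; rewrite mem_filter mem_iota add0n ltnS => /andP [_ hi].
exact: h.
Qed.
End EvOd.
Section Ab.
Variable C : precat.
Hypothesis HC : abelian C.

Lemma ker_ex (A B : C) (f : Hm A B) : exists K (k : Hm K A), is_kernel f k.
Proof. by case: HC => _ [_ hk _ _ _]; apply: hk. Qed.
Lemma coker_ex (A B : C) (f : Hm A B) : exists D (c : Hm B D), is_cokernel f c.
Proof. by case: HC => _ [_ _ hc _ _]; apply: hc. Qed.

Lemma ker_fact (A B K X : C) (g : Hm A B) (k : Hm K A) (x : Hm X A) :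
  is_kernel g k -> cp g x = 0 -> exists y, cp k y = x.
Proof. by move=> [_ h] /h [y [hy _]]; exists y. Qed.
Lemma coker_fact (A B D X : C) (f : Hm A B) (c : Hm B D) (x : Hm B X) :
  is_cokernel f c -> cp x f = 0 -> exists y, cp y c = x.
Proof. by move=> [_ h] /h [y [hy _]]; exists y. Qed.

Lemma coker_epi (A B D : C) (f : Hm A B) (c : Hm B D) : is_cokernel f c -> epi c.
Proof.
move=> [cf0 H] X g h e.
case: (H X (cp g c)); first by rewrite -compA cf0 compm0.
move=> u [_ Hu].
by rewrite -(Hu g erefl) (Hu h (esym e)).
Qed.

Lemma exact_fact (A B D : C) (f : Hm A B) (g : Hm B D) : exact_at f g ->
  exists K (k : Hm K B) (f' : Hm A K), [/\ is_kernel g k, cp k f' = f & epi f'].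
Proof.
move=> [gf0 ex].
have [K [k hk]] := ker_ex g.
have [f' ef'] := ker_fact hk gf0.
exists K, k, f'; split=> //.
have [Dc [c hc]] := coker_ex f.
have ck0 := ex _ _ _ _ hk hc.
have [Q [q hq]] := coker_ex f'.
have [J [j hj]] := ker_ex q.
have [f1 ef1] := ker_fact hj (proj1 hq).
have mk := kernel_mono hk; have mj := kernel_mono hj.
have mm := mono_comp mk mj.
have [D' [h hh]] : exists D' (h : Hm B D'), is_kernel h (cp k j).
  by case: HC => _ [_ _ _ hm _]; apply: hm.
have hf0 : cp h f = 0 by rewrite -ef' -ef1 !compA -(compA h k j) (proj1 hh) !comp0m.
have [h' eh'] := coker_fact hc hf0.
have hk0 : cp h k = 0 by rewrite -eh' -compA ck0 compm0.
have [t et] := ker_fact hh hk0.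
have ejt : cp j t = idm K by apply: mk; rewrite compm1 compA et.
have q0 : q = 0 by rewrite -[q]compm1 -ejt compA (proj1 hj) comp0m.
move=> X u v e.
have e0 : cp (u - v) f' = 0 by rewrite compBm e subrr.
have [w ew] := coker_fact hq e0.
by apply/eqP; rewrite -subr_eq0 -ew q0 compm0.
Qed.

Lemma exact_proj (A B D P : C) (f : Hm A B) (g : Hm B D) : exact_at f g -> projective P ->
  forall x : Hm P B, cp g x = 0 -> exists y, cp f y = x.
Proof.
move=> /exact_fact [K [k [f' [hk ekf ef']]]] hP x gx.
have [x' ex'] := ker_fact hk gx.
have [y ey] := hP _ _ _ ef' x'.
by exists y; rewrite -ekf -compA ey.
Qed.

Lemma exact_mono (A B D X : C) (f : Hm A B) (g : Hm B D) : exact_at f g -> mono f ->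
  forall x : Hm X B, cp g x = 0 -> exists y, cp f y = x.
Proof.
move=> /exact_fact [K [k [f' [hk ekf ef']]]] mf x gx.
have [x' ex'] := ker_fact hk gx.
have mf' : mono f'.
  by move=> Y a b e; apply: mf; rewrite -ekf -!compA e.
have [W [w hw]] : exists W (w : Hm W A), is_cokernel w f'.
  by case: HC => _ [_ _ _ _ he]; apply: he.
have w0 : w = 0 by apply: mf'; rewrite (proj1 hw) compm0.
have [v ev] : exists v, cp v f' = idm A.
  by apply: (coker_fact hw); rewrite w0 compm0.
have fv : cp f' v = idm K by apply: ef'; rewrite -compA ev compm1 comp1m.
by exists (cp v x'); rewrite -ekf -compA (compAE _ fv) comp1m.
Qed.

End Ab.
Section Peel.
Variable C : precat.
Hypothesis HC : abelian C.
Local Open Scope nat_scope.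

Definition topc (m : nat) (Y : nat -> C) (D : forall k, Hm (Y k.+1) (Y k)) (Tp : C) :
  Hm Tp (Y m) -> Prop :=
  match m as m0 return Hm Tp (Y m0) -> Prop with
  | 0 => fun t => forall P (x : Hm P (Y 0)), projective P -> exists y, cp t y = x
  | j.+1 => fun t => [/\ cp (D j) t = 0%R,
       (forall P (x : Hm P (Y j.+1)), projective P -> cp (D j) x = 0%R -> exists y, cp t y = x)
     & (forall P (x : Hm P (Y 0)), projective P -> exists y, cp (D 0) y = x)]
  end.

Definition cx_ok (m : nat) (Y : nat -> C) (D : forall k, Hm (Y k.+1) (Y k)) (Tp : C)
   (t : Hm Tp (Y m)) : Prop :=
  [/\ (forall k, k <= m -> projective (Y k)) /\ projective Tp,
      (forall k, k.+2 <= m -> cp (D k) (D k.+1) = 0%R),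
      (forall k, k.+1 < m -> forall P (x : Hm P (Y k.+1)), projective P ->
           cp (D k) x = 0%R -> exists y, cp (D k.+1) y = x),
      (forall P (x : Hm P Tp), projective P -> cp t x = 0%R -> x = 0%R)
    & topc D t].

Lemma retract_proj (A B : C) (i : Hm A B) (p : Hm B A) : cp p i = idm A ->
  projective B -> projective A.
Proof.
move=> pi hB X Y e he f.
have [g eg] := hB _ _ _ he (cp f p).
by exists (cp g i); rewrite compA eg -compA pi compm1.
Qed.

Lemma split_bottom (Y0 Y1 : C) (d : Hm Y1 Y0) (s : Hm Y0 Y1) : cp d s = idm Y0 ->
  exists K (k : Hm K Y1) (p2 : Hm Y1 K), is_kernel d k /\ is_biprod s k d p2.
Proof.
move=> ds.
have [K [k hk]] := ker_ex HC d.
have mk := kernel_mono hk.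
have [p2 ep2] : exists p2, cp k p2 = (idm Y1 - cp s d)%R.
  by apply: (ker_fact hk); rewrite compmB compm1 compA ds comp1m subrr.
exists K, k, p2; split => //.
have dk : cp d k = 0%R := proj1 hk.
split => //.
- by apply: mk; rewrite compA ep2 compBm comp1m compm1 -compA dk compm0 subr0.
- by apply: mk; rewrite compA ep2 compBm comp1m -compA ds compm1 subrr compm0.
- by rewrite ep2 addrC subrK.
Qed.

Lemma peel m : forall Y D Tp t, @cx_ok m Y D Tp t ->
  forall Yf : nat -> C, (forall k, k <= m -> Yf k = Y k) -> Yf m.+1 = Tp ->
  is_iso (sumL HC (ev Yf m.+1)) (sumL HC (od Yf m.+1)).
Proof.
elim: m => [|m IH] Y D Tp t [[hpY hpT] hcD hmid hmono htop] Yf hY hT.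
  rewrite ev_S od_S /= hT hY //.
  apply: bsum_cong; last exact: iso_refl.
  have [s ts] := htop _ (idm (Y 0)) (hpY 0 (leqnn 0)).
  exists s, t; split=> //.
  apply/eqP; rewrite -subr_eq0; apply/eqP; apply: (hmono _ _ hpT).
  by rewrite compmB compA ts comp1m compm1 subrr.
case: htop => hDt htexact hbot.
have [s ds] := hbot _ (idm (Y 0)) (hpY 0 (leq0n _)).
have [K [k [p2 [hk hbp]]]] := split_bottom ds.
have mk := kernel_mono hk.
have dk : cp (D 0) k = 0%R := proj1 hk.
have pK : projective K.
  apply: (retract_proj (i:=k) (p:=p2)); [by case: hbp | exact: hpY 1 _].
have hiso : is_iso (bsum HC (Y 0) K) (Y 1) :=
  bp_iso (bprop (bs HC (Y 0) K)) hbp (iso_refl _) (iso_refl _).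
have hI : is_iso (sumL HC (ev (fun i => match i with 0 => K | j.+1 => Yf j.+2 end) m.+1))
                 (sumL HC (od (fun i => match i with 0 => K | j.+1 => Yf j.+2 end) m.+1)).
  destruct m as [|j].
  - have [t' et'] := ker_fact hk hDt.
    apply: (IH (fun i => match i with 0 => K | j.+1 => Y j.+2 end) (fun i => 0%R) Tp t').
    + split.
      * by split=> // kk; rewrite leqn0 => /eqP ->.
      * by [].
      * by [].
      * move=> P x hP e; apply: (hmono P x hP); by rewrite -et' -compA e compm0.
      * move=> P x hP /=.
        have [y ey] : exists y, cp t y = cp k x.
          by apply: htexact hP _; rewrite compA dk comp0m.
        by exists y; apply: mk; rewrite compA et'.
    + by move=> kk; rewrite leqn0 => /eqP ->.
    + exact: hT.
  - have [d1 ed1] := ker_fact hk (hcD 0 (isT : 2 <= j.+2)).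
    pose Y' : nat -> C := fun i => match i with 0 => K | i'.+1 => Y i'.+2 end.
    pose D' : forall i, Hm (Y' i.+1) (Y' i) :=
      fun i => match i return Hm (Y' i.+1) (Y' i) with 0 => d1 | i'.+1 => D i'.+2 end.
    apply: (IH Y' D' Tp t).
    + split.
      * split=> // -[|kk] hkk //; exact: hpY.
      * case=> [|kk] hkk; rewrite /D' /=.
          apply: mk; rewrite compA ed1 compm0; exact: hcD 1 hkk.
        exact: hcD kk.+2 hkk.
      * case=> [|kk] hkk P x hP; rewrite /D' /=.
          move=> hx; apply: (hmid 1 hkk P x hP).
          by rewrite -ed1 -compA hx compm0.
        exact: hmid kk.+2 hkk P x hP.
      * exact: hmono.
      * rewrite /topc; split.
        - destruct j as [|i]; rewrite /D' /= //.
          by apply: mk; rewrite compA ed1 hDt compm0.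
        - destruct j as [|i]; rewrite /D' /= //.
          move=> P x hP hx; apply: (htexact P x hP).
          by rewrite -ed1 -compA hx compm0.
        - move=> P x hP; rewrite /D' /=.
          have [y ey] : exists y, cp (D 1) y = cp k x.
            by apply: (hmid 0 (isT : 1 < j.+2) P _ hP); rewrite compA dk comp0m.
          by exists y; apply: mk; rewrite compA ed1.
    + by case=> [|kk] hkk //; apply: hY.
    + exact: hT.
move: hI; rewrite (ev_S _ m) (od_S _ m) => hI.
rewrite (ev_S _ m.+1) (od_S _ m.+1) (od_S _ m) (ev_S _ m) !hY //.
apply: iso_trans (bsum_congl HC _ (iso_sym hI)) _.
apply: iso_trans (bsum_assoc HC _ _ _) _.
rewrite [X in is_iso _ X]/=. exact: (bsum_cong HC hiso (iso_refl _)).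
Qed.

End Peel.
Section Ext.
Variable C : precat.
Hypothesis HC : abelian C.
Variables N M : C.

Definition XX r (E : ext N M r) (i : nat) : C :=
  match i with 0 => N | j.+1 => eobj E j end.
Definition DD r (E : ext N M r) (i : nat) : Hm (XX E i.+1) (XX E i) :=
  match i return Hm (XX E i.+1) (XX E i) with 0 => eaug E | j.+1 => ediff E j end.

Lemma uex r (E : ext N M r) : exact_ext E ->
  [/\ epi (DD E 0), mono (eincl E), @exact_at C M (XX E r.+1) (XX E r) (eincl E) (DD E r)
    & forall i, (i < r)%N -> exact_at (DD E i.+1) (DD E i)].
Proof.
case=> he htop hbot hmid; split => //.
- by destruct r; case: htop.
- by destruct r; case: htop.
- by case=> [|i] hi; [exact: hbot | exact: hmid].
Qed.

Lemma exact_comp0 (A B D : C) (f : Hm A B) (g : Hm B D) : exact_at f g -> cp g f = 0.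
Proof. by case. Qed.

Definition projE r (E : ext N M r) := forall i, (i <= r)%N -> projective (eobj E i).

Definition chainm r (E G : ext N M r) (f : forall i, Hm (XX E i) (XX G i)) :=
  forall i, (i <= r)%N -> cp (f i) (DD E i) = cp (DD G i) (f i.+1).

Lemma homotopy r (E G : ext N M r) (f : forall i, Hm (XX E i) (XX G i)) (al : Hm M M) :
  exact_ext E -> exact_ext G -> projE E -> chainm f -> f 0%N = 0 ->
  cp (f r.+1) (eincl E) = cp (eincl G) al -> exists h : Hm (eobj E r) M, al = cp h (eincl E).
Proof.
move=> /uex [eE mE tE xE] /uex [eG mG tG xG] pE cf f0 fal.
have I : forall k, (k <= r)%N -> exists s : Hm (XX E k) (XX G k.+1),
    cp (DD G k) (f k.+1 - cp s (DD E k)) = 0.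
  elim=> [|k IH] hk.
    by exists 0; rewrite comp0m subr0 -cf // f0 comp0m.
  have [s hs] := IH (ltnW hk).
  have [u eu] := exact_proj HC (xG k hk) (pE k (ltnW hk)) hs.
  exists u; rewrite compmB -cf // compA eu compBm -compA (exact_comp0 (xE k hk)).
  by rewrite compm0 subr0 subrr.
have [s hs] := I r (leqnn r).
have [h eh] := exact_proj HC tG (pE r (leqnn r)) hs.
exists h; apply: mG; rewrite compA eh compBm -fal -compA (exact_comp0 tE) compm0 subr0.
done.
Qed.

Fixpoint cmpF r (E G : ext N M r) (i : nat) : Hm (XX E i.+1) (XX G i.+1) :=
  match i return Hm (XX E i.+1) (XX G i.+1) with
  | 0 => epsilon (inhabits 0) (fun y => cp (DD G 0) y = cp (idm N) (DD E 0))
  | j.+1 => epsilon (inhabits 0) (fun y => cp (DD G j.+1) y = cp (cmpF E G j) (DD E j.+1))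
  end.
Definition cmpf r (E G : ext N M r) (i : nat) : Hm (XX E i) (XX G i) :=
  match i return Hm (XX E i) (XX G i) with 0 => idm N | j.+1 => cmpF E G j end.

Lemma comparison r (E G : ext N M r) : exact_ext E -> exact_ext G -> projE E ->
  exists f : forall i, Hm (XX E i) (XX G i),
    [/\ chainm f, f 0%N = idm N & exists al, cp (f r.+1) (eincl E) = cp (eincl G) al].
Proof.
move=> /uex [eE mE tE xE] /uex [eG mG tG xG] pE.
have cf : chainm (cmpf E G).
  elim=> [|j IH] hj.
    rewrite /= /cmpF; apply: esym; apply: (epsilon_spec (inhabits 0)
      (fun y => cp (DD G 0) y = cp (idm N) (DD E 0))).
    exact: pE 0%N hj _ _ _ eG _.
  rewrite /=; apply: esym; apply: (epsilon_spec (inhabits 0)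
      (fun y => cp (DD G j.+1) y = cp (cmpF E G j) (DD E j.+1))).
  apply: (exact_proj HC (xG j hj) (pE j.+1 hj)).
  by rewrite compA -(IH (ltnW hj)) -compA (exact_comp0 (xE j hj)) compm0.
exists (cmpf E G); split => //.
have h0 : cp (DD G r) (cp (cmpf E G r.+1) (eincl E)) = 0.
  by rewrite compA -cf // -compA (exact_comp0 tE) compm0.
have [al eal] := exact_mono HC tG mG h0.
by exists al.
Qed.

End Ext.
Section Lists.
Variable C : precat.
Hypothesis HC : abelian C.

Lemma catE (T : Type) (s1 s2 : seq T) : s1 ++ s2 = List.app s1 s2.
Proof. by elim: s1 => //= x s1 ->. Qed.

Lemma permE (T : Type) (l1 l2 : seq T) (a b : T) :
  Permutation ((l1 ++ l2) ++ [:: a; b]) ((l1 ++ [:: a]) ++ (l2 ++ [:: b])).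
Proof.
rewrite !catE -!List.app_assoc; apply: Permutation_app_head.
rewrite /=; apply: Permutation_sym; apply: Permutation_middle.
Qed.

Lemma W_lem (A B : nat -> C) n :
  is_iso (sumL HC (ev (fun k => bsum HC (A k) (B k)) n)) (sumL HC (ev A n ++ ev B n)) /\
  is_iso (sumL HC (od (fun k => bsum HC (A k) (B k)) n)) (sumL HC (od A n ++ od B n)).
Proof.
elim: n => [|n [IH1 IH2]].
  rewrite !ev0 !od0; split; [exact: sumL_expand | exact: iso_refl].
rewrite !ev_snoc !od_snoc; case: (odd n.+1); rewrite ?cats0; split => //.
- apply: iso_trans (sumL_app_l _ IH2) _.
  apply: iso_trans (sumL_app_r _ (sumL_expand HC _ _)) _.
  apply: sumL_perm; exact: permE.
- apply: iso_trans (sumL_app_l _ IH1) _.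
  apply: iso_trans (sumL_app_r _ (sumL_expand HC _ _)) _.
  apply: sumL_perm; exact: permE.
Qed.

Lemma permG (T : Type) (l1 l2 o : seq T) : Permutation ((l1 ++ l2) ++ o) ((l1 ++ o) ++ l2).
Proof.
rewrite !catE -!List.app_assoc; apply: Permutation_app_head; exact: Permutation_app_comm.
Qed.
Lemma permH (T : Type) (a : T) (l1 l2 o : seq T) :
  Permutation (a :: ((l1 ++ l2) ++ o)) ((l1 ++ o) ++ a :: l2).
Proof.
apply: Permutation_trans (perm_skip a (permG l1 l2 o)) _.
rewrite !catE; exact: Permutation_middle.
Qed.

Lemma cone_lists (PE QF G : nat -> C) r :
  (forall k, (k < r)%N -> G k = bsum HC (PE k) (QF k.+1)) -> G r = PE r ->
  is_iso (sumL HC (ev G r)) (sumL HC (ev PE r ++ od QF r)) /\ is_iso (sumL HC (QF 0%N :: od G r)) (sumL HC (od PE r ++ ev QF r)).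
Proof.
case: r => [|s] hW hG.
  by rewrite !ev0 !od0 hG cats0 /=; split; apply: iso_refl.
have [W1 W2] := W_lem PE (fun k => QF k.+1) s.
rewrite (ev_S QF s) (od_S QF s) !ev_snoc !od_snoc hG.
rewrite (ev_ext (g := fun k => bsum HC (PE k) (QF k.+1))); last by move=> i hi; apply: hW.
rewrite (od_ext (g := fun k => bsum HC (PE k) (QF k.+1))); last by move=> i hi; apply: hW.
split.
  apply: iso_trans (sumL_app_l _ W1) _.
  apply: sumL_perm; exact: permG.
apply: iso_trans (bsum_congl HC _ (sumL_app_l _ W2)) _.
apply: (sumL_perm HC (L := _ :: _)); exact: permH.
Qed.

End Lists.
Section PhiSec.
Variable C : precat.
Hypothesis HC : abelian C.
Variables N M : C.

Definition Phi r (E G : ext N M r) : Prop :=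
  forall f : forall i, Hm (XX E i) (XX G i), chainm f -> f 0%N = idm N ->
  forall al, cp (f r.+1) (eincl E) = cp (eincl G) al ->
  exists h : Hm (eobj E r) M, al - idm M = cp h (eincl E).

Lemma mor_chain r (G H : ext N M r) : ext_mor G H ->
  exists psi : forall i, Hm (XX G i) (XX H i),
    [/\ chainm psi, psi 0%N = idm N & cp (psi r.+1) (eincl G) = eincl H].
Proof.
case=> phi [h0 hr hsq].
exists (fun i => match i return Hm (XX G i) (XX H i) with 0 => idm N | j.+1 => phi j end).
split => //.
case=> [|j] hj /=; first by rewrite comp1m h0.
exact: hsq.
Qed.

Lemma chain_comp r (E G H : ext N M r) (f : forall i, Hm (XX E i) (XX G i))
  (g : forall i, Hm (XX G i) (XX H i)) :
  chainm f -> chainm g -> chainm (fun i => cp (g i) (f i)).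
Proof.
by move=> cf cg i hi /=; rewrite -compA cf // !compA cg.
Qed.

Lemma chain_sub r (E G : ext N M r) (f g : forall i, Hm (XX E i) (XX G i)) :
  chainm f -> chainm g -> chainm (fun i => f i - g i).
Proof. by move=> cf cg i hi /=; rewrite compBm compmB cf // cg. Qed.

Lemma chain_id r (E : ext N M r) : chainm (fun i => idm (XX E i)).
Proof. by move=> i hi; rewrite comp1m compm1. Qed.

Lemma Phi_self r (E : ext N M r) : exact_ext E -> projE E -> Phi E E.
Proof.
move=> hE pE f cf f0 al fal.
have e0 : (fun i => f i - idm (XX E i)) 0%N = 0 by rewrite /= f0 subrr.
have e1 : cp ((fun i => f i - idm (XX E i)) r.+1) (eincl E) = cp (eincl E) (al - idm M).
  by rewrite /= compBm fal comp1m compmB compm1.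
have [h eh] := homotopy HC hE hE pE (chain_sub cf (chain_id E)) e0 e1.
by exists h.
Qed.

Lemma Phi_fwd r (E G H : ext N M r) : exact_ext E -> projE E -> exact_ext G -> exact_ext H ->
  ext_mor G H -> Phi E G -> Phi E H.
Proof.
move=> hE pE hG hH /mor_chain [psi [cpsi psi0 psir]] PG f cf f0 al fal.
have [f' [cf' f'0 [al' fal']]] := comparison HC hE hG pE.
have [h' eh'] := PG f' cf' f'0 al' fal'.
have e0 : (fun i => f i - cp (psi i) (f' i)) 0%N = 0 by rewrite /= f0 psi0 f'0 comp1m subrr.
have e1 : cp ((fun i => f i - cp (psi i) (f' i)) r.+1) (eincl E) = cp (eincl H) (al - al').
  by rewrite /= compBm fal -compA fal' compA psir compmB.
have [h eh] := homotopy HC hE hH pE (chain_sub cf (chain_comp cf' cpsi)) e0 e1.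
exists (h + h'); rewrite compDl -eh -eh'.
by rewrite addrA subrK.
Qed.

Lemma Phi_bwd r (E G H : ext N M r) : ext_mor G H -> Phi E H -> Phi E G.
Proof.
move=> /mor_chain [psi [cpsi psi0 psir]] PH f cf f0 al fal.
apply: (PH (fun i => cp (psi i) (f i)) (chain_comp cf cpsi)).
  by rewrite /= psi0 f0 comp1m.
by rewrite /= -compA fal compA psir.
Qed.

Lemma Phi_equiv r (E : ext N M r) : exact_ext E -> projE E ->
  forall G H, yoneda_equiv G H ->
   (exact_ext G -> exact_ext H /\ (Phi E G -> Phi E H)) /\
   (exact_ext H -> exact_ext G /\ (Phi E H -> Phi E G)).
Proof.
move=> hE pE G H; elim.
- move=> x y [hx hy hm]; split=> _; split => //.
    exact: Phi_fwd hE pE hx hy hm.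
  exact: Phi_bwd hm.
- by move=> x; split=> h; split.
- by move=> x y _ [h1 h2]; split.
- move=> x y z _ [h1 h2] _ [h3 h4]; split.
    move=> hx; have [hy p1] := h1 hx; have [hz p2] := h3 hy.
    by split => // p; apply: p2; apply: p1.
  move=> hz; have [hy p2] := h4 hz; have [hx p1] := h2 hy.
  by split => // p; apply: p1; apply: p2.
Qed.

End PhiSec.
Section Cone.
Variable C : precat.
Hypothesis HC : abelian C.
Variables N M : C.

Lemma bs_eqs (A B : C) (b : bpd A B) :
  [/\ cp (bp1 b) (bi1 b) = idm A, cp (bp2 b) (bi2 b) = idm B, cp (bp1 b) (bi2 b) = 0,
      cp (bp2 b) (bi1 b) = 0 & cp (bi1 b) (bp1 b) + cp (bi2 b) (bp2 b) = idm (bo b)].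
Proof. exact: bprop b. Qed.

Lemma mk_p1 (A B P : C) (b : bpd A B) (a : Hm P A) (c : Hm P B) :
  cp (bp1 b) (cp (bi1 b) a + cp (bi2 b) c) = a.
Proof. by case: (bs_eqs b) => e11 e22 e12 e21 _; rewrite compDr !compA e11 e12 comp1m comp0m addr0. Qed.
Lemma mk_p2 (A B P : C) (b : bpd A B) (a : Hm P A) (c : Hm P B) :
  cp (bp2 b) (cp (bi1 b) a + cp (bi2 b) c) = c.
Proof. by case: (bs_eqs b) => e11 e22 e12 e21 _; rewrite compDr !compA e22 e21 comp1m comp0m add0r. Qed.

Lemma eq_bs (A B P : C) (b : bpd A B) (x y : Hm P (bo b)) :
  cp (bp1 b) x = cp (bp1 b) y -> cp (bp2 b) x = cp (bp2 b) y -> x = y.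
Proof.
case: (bs_eqs b) => _ _ _ _ es e1 e2.
by rewrite -[x]comp1m -[y]comp1m -es !compDl -!compA e1 e2.
Qed.

Lemma proj_bs (A B : C) (b : bpd A B) : projective A -> projective B -> projective (bo b).
Proof.
case: (bs_eqs b) => e11 e22 e12 e21 es hA hB X Y e he g.
have [a1 ea1] := hA _ _ _ he (cp g (bi1 b)).
have [a2 ea2] := hB _ _ _ he (cp g (bi2 b)).
exists (cp a1 (bp1 b) + cp a2 (bp2 b)).
by rewrite compDr !compA ea1 ea2 -!compA -compDr es compm1.
Qed.

Definition cb r (E F : ext N M r) (j : nat) := bs HC (XX E j.+1) (XX F j.+2).
Definition coneY r (E F : ext N M r) (k : nat) : C :=
  match k with 0 => XX F 1 | j.+1 => bo (cb E F j) end.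
Definition coneD r (E F : ext N M r) (f : forall i, Hm (XX E i) (XX F i)) (k : nat) :
  Hm (coneY E F k.+1) (coneY E F k) :=
  match k return Hm (coneY E F k.+1) (coneY E F k) with
  | 0 => cp (f 1%N) (bp1 (cb E F 0)) + cp (DD F 1) (bp2 (cb E F 0))
  | j.+1 => cp (bi1 (cb E F j)) (cp (- DD E j.+1) (bp1 (cb E F j.+1))) +
            cp (bi2 (cb E F j)) (cp (f j.+2) (bp1 (cb E F j.+1)) + cp (DD F j.+2) (bp2 (cb E F j.+1)))
  end.
Definition coneT r (E F : ext N M r) (phi : Hm (XX E r.+1) (XX F r.+1)) :
  Hm (XX E r.+1) (coneY E F r) :=
  match r as r0 return forall E F : ext N M r0, Hm (XX E r0.+1) (XX F r0.+1) ->
                        Hm (XX E r0.+1) (coneY E F r0) with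
  | 0 => fun E F phi => phi
  | s.+1 => fun E F phi => cp (bi1 (cb E F s)) (- DD E s.+1) + cp (bi2 (cb E F s)) phi
  end E F phi.

Lemma cD_p1 r (E F : ext N M r) f j (P : C) (z : Hm P (coneY E F j.+2)) :
  cp (bp1 (cb E F j)) (cp (coneD f j.+1) z) = - cp (DD E j.+1) (cp (bp1 (cb E F j.+1)) z).
Proof. by rewrite [in LHS]compA /= mk_p1 !compNm -compA. Qed.
Lemma cD_p2 r (E F : ext N M r) f j (P : C) (z : Hm P (coneY E F j.+2)) :
  cp (bp2 (cb E F j)) (cp (coneD f j.+1) z) =
  cp (f j.+2) (cp (bp1 (cb E F j.+1)) z) + cp (DD F j.+2) (cp (bp2 (cb E F j.+1)) z).
Proof. by rewrite [in LHS]compA /= mk_p2 compDl -!compA. Qed.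
Lemma cD0 r (E F : ext N M r) f (P : C) (z : Hm P (coneY E F 1)) :
  cp (coneD f 0) z = cp (f 1%N) (cp (bp1 (cb E F 0)) z) + cp (DD F 1) (cp (bp2 (cb E F 0)) z).
Proof. by rewrite /= compDl -!compA. Qed.

Lemma cDp1u r (E F : ext N M r) f j :
  cp (bp1 (cb E F j)) (coneD f j.+1) = - cp (DD E j.+1) (bp1 (cb E F j.+1)).
Proof. by rewrite -[coneD f j.+1]compm1 cD_p1 compm1. Qed.
Lemma cDp2u r (E F : ext N M r) f j :
  cp (bp2 (cb E F j)) (coneD f j.+1) =
  cp (f j.+2) (bp1 (cb E F j.+1)) + cp (DD F j.+2) (bp2 (cb E F j.+1)).
Proof. by rewrite -[coneD f j.+1]compm1 cD_p2 !compm1. Qed.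

Definition cone_hyp r (E F : ext N M r) (f : forall i, Hm (XX E i) (XX F i))
  (phi : Hm (XX E r.+1) (XX F r.+1)) :=
  [/\ exact_ext E, exact_ext F, projE E, projE F &
   [/\ (forall i, (i < r)%N -> cp (f i) (DD E i) = cp (DD F i) (f i.+1)),
       cp (f r) (DD E r) = cp (DD F r) phi, f 0%N = idm N & cp phi (eincl E) = eincl F]].

Lemma comp_cond r (E F : ext N M r) f phi : cone_hyp f phi ->
  forall k, (k < r)%N -> forall P (x : Hm P (coneY E F k.+1)), cp (coneD f k) x = 0 ->
  cp (DD E k) (cp (bp1 (cb E F k)) x) = 0 /\ cp (f k.+1) (cp (bp1 (cb E F k)) x) + cp (DD F k.+1) (cp (bp2 (cb E F k)) x) = 0.
Proof.
case=> /uex [eE mE tE xE] /uex [eF mF tF xF] pE pF [hsq hsqr f0 hphi].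
case=> [|j] hk P x hx.
  rewrite cD0 in hx; split=> //.
  rewrite -[DD E 0]comp1m -f0 hsq // -compA.
  move/eqP: hx; rewrite addr_eq0 => /eqP ->.
  by rewrite compmN compA (exact_comp0 (xF 0%N hk)) comp0m oppr0.
have h1 := f_equal (fun z => cp (bp1 (cb E F j)) z) hx.
have h2 := f_equal (fun z => cp (bp2 (cb E F j)) z) hx.
rewrite /= cD_p1 compm0 in h1; rewrite /= cD_p2 compm0 in h2.
by split => //; apply/eqP; rewrite -oppr_eq0 h1.
Qed.

Lemma mid_chase r (E F : ext N M r) f phi : cone_hyp f phi ->
  forall k, (k.+1 < r)%N -> forall P, projective P ->
  forall (a : Hm P (XX E k.+1)) (c : Hm P (XX F k.+2)),
  cp (DD E k) a = 0 -> cp (f k.+1) a + cp (DD F k.+1) c = 0 ->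
  exists a0 b0, cp (DD E k.+1) a0 = a /\ - cp (f k.+2) a0 + cp (DD F k.+2) b0 = c.
Proof.
case=> /uex [eE mE tE xE] /uex [eF mF tF xF] pE pF [hsq hsqr f0 hphi].
move=> k hk P hP a c ha hc.
have [a0 ea0] := exact_proj HC (xE k (ltnW hk)) hP ha.
have h0 : cp (DD F k.+1) (cp (f k.+2) a0 + c) = 0.
  by rewrite compDr compA -hsq // -compA ea0.
have [b0 eb0] := exact_proj HC (xF k.+1 hk) hP h0.
by exists a0, b0; split => //; rewrite eb0 addKr.
Qed.

End Cone.

Section ConeOk.
Variable C : precat.
Hypothesis HC : abelian C.
Variables N M : C.

Lemma cone_ok r (E F : ext N M r) f phi : cone_hyp f phi ->
  @cx_ok C r (coneY HC E F) (coneD HC f) (XX E r.+1) (@coneT C HC N M r E F phi).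
Proof.
move=> H; have H' := H; case: H => hE hF pE pF [hsq hsqr f0 hphi].
have [eE mE tE xE] := uex hE; have [eF mF tF xF] := uex hF.
split.
- split; last exact: pE r (leqnn r).
  case=> [|j] hj; first exact: pF 0%N (leq0n r).
  apply: proj_bs; [exact: pE j (ltnW hj) | exact: pF j.+1 hj].
- case=> [|j] hj.
    rewrite cD0 cDp1u cDp2u compmN compDr !compA (hsq 1%N hj) (exact_comp0 (xF 1%N hj)).
    by rewrite comp0m addr0 addNr.
  apply: (eq_bs (b := cb HC E F j)); rewrite compm0.
    rewrite compA cDp1u compNm -compA cDp1u compmN opprK compA.
    by rewrite (exact_comp0 (xE j.+1 (ltnW hj))) comp0m ?oppr0.
  rewrite compA cDp2u compDl -!compA cDp1u cDp2u compmN compDr !compA (hsq j.+2 hj).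
  by rewrite (exact_comp0 (xF j.+2 hj)) comp0m addr0 addNr.
- move=> k hk P x hP hx.
  have [hi hii] := comp_cond H' (ltnW hk) hx.
  have [a0 [b0 [ea0 eb0]]] := mid_chase HC H' hk hP hi hii.
  exists (cp (bi1 (cb HC E F k.+1)) (- a0) + cp (bi2 (cb HC E F k.+1)) b0).
  apply: (eq_bs (b := cb HC E F k)).
    by rewrite cD_p1 mk_p1 compmN opprK ea0.
  by rewrite cD_p2 mk_p1 mk_p2 compmN eb0.
- move=> P x hP hx.
  have [h0 h1] : cp (DD E r) x = 0 /\ cp phi x = 0.
    destruct r as [|s].
      split=> //; by rewrite -[DD E 0]comp1m -f0 hsqr -compA hx compm0.
    have h1 := f_equal (fun z => cp (bp1 (cb HC E F s)) z) hx.
    have h2 := f_equal (fun z => cp (bp2 (cb HC E F s)) z) hx.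
    rewrite /= compA mk_p1 compm0 in h1; rewrite /= compA mk_p2 compm0 in h2.
    split => //; apply/eqP; rewrite -oppr_eq0 -compNm h1 //.
  have [m0 em] := exact_proj HC tE hP h0.
  have e0 : cp (eincl F) m0 = 0 by rewrite -hphi -compA em h1.
  have em0 : m0 = 0 by apply: mF; rewrite e0 compm0.
  by rewrite -em em0 compm0.
- destruct r as [|s].
    move=> P x hP /=.
    have [a ea] := hP _ _ _ eE (cp (DD F 0) x).
    have h0 : cp (DD F 0) (x - cp phi a) = 0.
      by rewrite compmB compA -hsqr f0 comp1m ea subrr.
    have [m0 em] := exact_proj HC tF hP h0.
    exists (a + cp (eincl E) m0).
    by rewrite compDr compA hphi em addrC subrK.
  split.
  + rewrite /coneT /=.
    destruct s as [|i].
      rewrite cD0 mk_p1 mk_p2 compmN.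
      by rewrite hsqr addNr.
    apply: (eq_bs (b := cb HC E F i)); rewrite compm0.
      by rewrite cD_p1 mk_p1 compmN opprK (exact_comp0 (xE i.+1 (ltnSn _))) ?oppr0.
    by rewrite cD_p2 mk_p1 mk_p2 compmN hsqr addNr.
  + move=> P x hP hx; rewrite /coneT /=.
    have [hi hii] := comp_cond H' (ltnSn s) hx.
    have [a0 ea0] := exact_proj HC (xE s (ltnSn s)) hP hi.
    have h0 : cp (DD F s.+1) (cp phi a0 + cp (bp2 (cb HC E F s)) x) = 0.
      by rewrite compDr compA -hsqr -compA ea0.
    have [m0 em] := exact_proj HC tF hP h0.
    exists (- a0 + cp (eincl E) m0).
    apply: (eq_bs (b := cb HC E F s)).
      rewrite compA mk_p1 compNm compDr compmN compA (exact_comp0 tE) comp0m addr0.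
      by rewrite opprK ea0.
    by rewrite compA mk_p2 compDr compmN compA hphi em addKr.
  + move=> P x hP.
    have [a ea] := hP _ _ _ eE (cp (DD F 0) x).
    have h0 : cp (DD F 0) (x - cp (f 1%N) a) = 0.
      by rewrite compmB compA -hsq // f0 comp1m ea subrr.
    have [b eb] := exact_proj HC (xF 0%N (ltn0Sn s)) hP h0.
    exists (cp (bi1 (cb HC E F 0)) a + cp (bi2 (cb HC E F 0)) b).
    by rewrite cD0 mk_p1 mk_p2 eb addrC subrK.
Qed.

End ConeOk.

Theorem lemmaA2 (C : precat) (HC : abelian C) (N M : C) (r : nat)
  (E F : ext N M r) (HE : exact_ext E) (HF : exact_ext F)
  (HEF : yoneda_equiv E F)
  (HP : forall i, (i <= r)%N -> projective (eobj E i))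
  (HQ : forall i, (i <= r)%N -> projective (eobj F i)) :
  forall S T : C,
    is_biprod_seq ([seq eobj E i | i <- iota 0 r.+1 & ~~ odd i]
                   ++ [seq eobj F i | i <- iota 0 r.+1 & odd i]) S ->
    is_biprod_seq ([seq eobj E i | i <- iota 0 r.+1 & odd i]
                   ++ [seq eobj F i | i <- iota 0 r.+1 & ~~ odd i]) T ->
    is_iso S T.
Proof.
move=> S T hS hT.
have [_ PEF] := proj1 (Phi_equiv HC HE HP HEF) HE.
have PF := PEF (Phi_self HC HE HP).
have [f [cf f0 [al fal]]] := comparison HC HE HF HP.
have [h eh] := PF f cf f0 al fal.
have [eF mF tF xF] := uex HF.
pose phi := f r.+1 - cp (eincl F) h.
have H : cone_hyp f phi.
  split => //; split => //.
  - by move=> i hi; apply: cf; apply: ltnW.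
  - by rewrite /phi compmB cf // compA (exact_comp0 tF) comp0m subr0.
  - rewrite /phi compBm fal -compA -eh -compmB opprB addrC subrK.
    by rewrite compm1.
have ok := cone_ok HC H.
pose Yf := fun k => if k == r.+1 then XX E r.+1 else coneY HC E F k.
have hY : forall k, (k <= r)%N -> Yf k = coneY HC E F k.
  move=> k hk; rewrite /Yf ifN //; apply/eqP => ek; move: hk; rewrite ek ltnn.
  by [].
have hT' : Yf r.+1 = XX E r.+1 by rewrite /Yf eqxx.
have hiso := peel HC ok hY hT'.
rewrite (ev_S Yf r) (od_S Yf r) in hiso.
have hG1 : forall k, (k < r)%N -> Yf k.+1 = bsum HC (eobj E k) (eobj F k.+1).
  move=> k hk; rewrite /Yf eqSS ifN //; apply/eqP => ek; move: hk; rewrite ek ltnn.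
  by [].
have hG2 : Yf r.+1 = eobj E r by rewrite /Yf eqxx.
have [c1 c2] := cone_lists (G := fun k => Yf k.+1) hG1 hG2.
apply: iso_trans (bps_sumL HC hS) _.
apply: iso_trans (iso_sym c1) _.
apply: iso_trans (iso_sym hiso) _.
apply: iso_trans c2 _.
exact: iso_sym (bps_sumL HC hT).
Qed.
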